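(* Let $\ell>0$, $g>0$, $T>0$, and let $f\colon\mathbb R\to\mathbb R$ be a $T$-periodic function of class $C^2$. Then the linear Whitney inverted pendulum problem has a $T$-periodic solution, i.e. there exists a $T$-periodic $C^2$ function $x\colon\mathbb R\to(-\ell,\ell)$ satisfying \[ \ddot x=\left(\frac{g}{\ell^2}\sqrt{\ell^2-x^2}-\frac{\dot x^2}{\ell^2-x^2}\right)x-\frac{\ell^2-x^2}{\ell^2}\,\ddot f(t)\quad\text{for all }t\in\mathbb R. \]
   Context: The linear Whitney inverted pendulum problem: a rod of length $\ell$, with its whole mass concentrated at its top, is pivoted (frictionlessly) on the floor of a car moving along a straight line, the pivot being at position $f(t)$ at time $t$; the rod moves in the vertical plane containing the line under gravity (gravitational constant $g$) and the motion of the car. Writing $x(t)$ for the horizontal displacement of the top of the rod relative to the pivot (so the height of the top is $\sqrt{\ell^2-x(t)^2}$), Newton's law gives the displayed differential equation. A solution for which the rod never touches the floor is one with $|x(t)|<\ell$ for all $t$; a $T$-periodic solution of the problem is such a solution which is $T$-periodic. *)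

(* Defs.v *)
From Stdlib Require Import Reals.
From Coquelicot Require Import Coquelicot.
Open Scope R_scope.

Definition C2 (f : R -> R) : Prop :=
  (forall t, ex_derive f t) /\
  (forall t, ex_derive (Derive f) t) /\
  (forall t, continuous (Derive (Derive f)) t).

Definition periodic (f : R -> R) (T : R) : Prop :=
  forall t, f (t + T) = f t.

(* Main.v *)
Require Import Defs.
From Stdlib Require Import Reals Lra Lia.
From Coquelicot Require Import Coquelicot.
Open Scope R_scope.

Lemma exRI (φ : R -> R) a b : (forall x, continuous φ x) -> ex_RInt φ a b.
Proof. intros H; apply (ex_RInt_continuous (V:=R_CompleteNormedModule)); intros; apply H. Qed.

Lemma derG (φ : R -> R) x : (forall x, continuous φ x) -> is_derive (fun y => RInt φ 0 y) x (φ x).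
Proof.
  intros H. apply (is_derive_RInt φ (fun y => RInt φ 0 y) 0).
  - apply filter_forall; intros; apply (RInt_correct (V:=R_CompleteNormedModule)); apply exRI; auto.
  - auto.
Qed.

Lemma deriv_mov (φ : R -> R) (T t : R) : (forall x, continuous φ x) ->
  is_derive (fun t => RInt φ t (t+T)) t (φ (t+T) - φ t).
Proof.
  intros H.
  apply is_derive_ext with (fun t => RInt φ 0 (t+T) - RInt φ 0 t).
  { intros y. rewrite <- (RInt_Chasles φ 0 y (y+T)) by (apply exRI; auto).
    unfold plus; simpl; ring. }
  apply (is_derive_minus (K:=R_AbsRing) (V:=R_NormedModule)).
  - assert (Hd := is_derive_comp (fun y => RInt φ 0 y) (fun y => y + T) t (φ (t+T)) 1).
    unfold scal in Hd; simpl in Hd; unfold mult in Hd; simpl in Hd. rewrite Rmult_1_l in Hd.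
    apply Hd. apply derG; auto. auto_derive; auto; ring.
  - apply derG; auto.
Qed.

Definition Af m (h : R -> R) s := exp (-(m*s)) * h s.
Definition Bf m (h : R -> R) s := exp (m*s) * h s.
Definition Ai m T h t := RInt (Af m h) t (t+T).
Definition Bi m T h t := RInt (Bf m h) t (t+T).
Definition cK m T := / (2*m*(1 - exp (-(m*T)))).
Definition K m T h t := cK m T * (exp (m*t) * Ai m T h t + exp (-(m*(t+T))) * Bi m T h t).
Definition K1 m T h t := cK m T * m * (exp (m*t) * Ai m T h t - exp (-(m*(t+T))) * Bi m T h t).

Lemma exd_cont (f : R -> R) x : ex_derive f x -> continuous f x.
Proof. intros H. apply (ex_derive_continuous (K:=R_AbsRing) (V:=R_NormedModule)). exact H. Qed.

Lemma cont_explin k x : continuous (fun s => exp (k*s)) x.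
Proof. apply exd_cont. auto_derive; auto. Qed.

Lemma cont_Af m h x : (forall x, continuous h x) -> continuous (Af m h) x.
Proof. intros H; unfold Af. apply (continuous_mult (K:=R_AbsRing)).
  apply exd_cont; auto_derive; auto. apply H. Qed.
Lemma cont_Bf m h x : (forall x, continuous h x) -> continuous (Bf m h) x.
Proof. intros H; unfold Bf. apply (continuous_mult (K:=R_AbsRing)).
  apply exd_cont; auto_derive; auto. apply H. Qed.

Lemma Ai_der m T h t : (forall x, continuous h x) -> periodic h T ->
  is_derive (Ai m T h) t ((exp (-(m*(t+T))) - exp (-(m*t))) * h t).
Proof.
  intros Hc Hp. unfold Ai. eapply is_derive_ext; [intros; reflexivity|].
  replace ((exp (-(m*(t+T))) - exp (-(m*t))) * h t) with (Af m h (t+T) - Af m h t).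
  apply deriv_mov. intros; apply cont_Af; auto.
  unfold Af; rewrite Hp; ring.
Qed.
Lemma Bi_der m T h t : (forall x, continuous h x) -> periodic h T ->
  is_derive (Bi m T h) t ((exp (m*(t+T)) - exp (m*t)) * h t).
Proof.
  intros Hc Hp. unfold Bi.
  replace ((exp (m*(t+T)) - exp (m*t)) * h t) with (Bf m h (t+T) - Bf m h t).
  apply deriv_mov. intros; apply cont_Bf; auto.
  unfold Bf; rewrite Hp; ring.
Qed.

Lemma K_der m T h t : 0 < m -> 0 < T -> (forall x, continuous h x) -> periodic h T ->
  is_derive (K m T h) t (K1 m T h t).
Proof.
  intros Hm HT Hc Hp. unfold K.
  auto_derive.
  - split; [|split; [|exact I]].
    + eexists; apply (Ai_der m T h t Hc Hp).
    + eexists; apply (Bi_der m T h t Hc Hp).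
  - replace (Derive (fun x : R => Ai m T h x) t) with ((exp (-(m*(t+T))) - exp (-(m*t))) * h t)
      by (symmetry; apply is_derive_unique; apply (Ai_der m T h t Hc Hp)).
    replace (Derive (fun x : R => Bi m T h x) t) with ((exp (m*(t+T)) - exp (m*t)) * h t)
      by (symmetry; apply is_derive_unique; apply (Bi_der m T h t Hc Hp)).
    unfold K1.
    rewrite !exp_Ropp, !Rmult_plus_distr_l, !exp_plus.
    assert (exp (m*t) > 0) by apply exp_pos.
    assert (exp (m*T) > 0) by apply exp_pos.
    field. split; lra.
Qed.

Lemma K1_der m T h t : 0 < m -> 0 < T -> (forall x, continuous h x) -> periodic h T ->
  is_derive (K1 m T h) t (m * m * K m T h t - h t).
Proof.
  intros Hm HT Hc Hp. unfold K1.
  auto_derive.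
  - split; [|split; [|exact I]].
    + eexists; apply (Ai_der m T h t Hc Hp).
    + eexists; apply (Bi_der m T h t Hc Hp).
  - replace (Derive (fun x : R => Ai m T h x) t) with ((exp (-(m*(t+T))) - exp (-(m*t))) * h t)
      by (symmetry; apply is_derive_unique; apply (Ai_der m T h t Hc Hp)).
    replace (Derive (fun x : R => Bi m T h x) t) with ((exp (m*(t+T)) - exp (m*t)) * h t)
      by (symmetry; apply is_derive_unique; apply (Bi_der m T h t Hc Hp)).
    unfold K, cK.
    rewrite !exp_Ropp, !Rmult_plus_distr_l, !exp_plus.
    assert (exp (m*t) > 0) by apply exp_pos.
    assert (1 < exp (m*T)).
    { rewrite <- exp_0. apply exp_increasing. nra. }
    field. repeat split; lra.
Qed.

Lemma RInt_shift (φ : R->R) a b T c: (forall x, continuous φ x) ->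
  (forall y, φ (y+T) = c * φ y) -> RInt φ (a+T) (b+T) = c * RInt φ a b.
Proof.
  intros Hc Hs.
  assert (E := RInt_comp_lin φ 1 T a b (exRI φ _ _ Hc)).
  replace (1*a+T) with (a+T) in E by ring. replace (1*b+T) with (b+T) in E by ring.
  rewrite <- E.
  rewrite (RInt_ext _ (fun y => scal c (φ y))).
  - exact (RInt_scal (V:=R_CompleteNormedModule) φ a b c (exRI φ a b Hc)).
  - intros x _. unfold scal; simpl; unfold mult; simpl. rewrite Rmult_1_l.
    replace (1*x+T) with (x+T) by ring. apply Hs.
Qed.

Lemma K_per m T h : (forall x, continuous h x) -> periodic h T -> periodic (K m T h) T.
Proof.
  intros Hc Hp t. unfold K, Ai, Bi.
  rewrite (RInt_shift (Af m h) t (t+T) T (exp (-(m*T)))).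
  rewrite (RInt_shift (Bf m h) t (t+T) T (exp (m*T))).
  - rewrite !exp_Ropp, !Rmult_plus_distr_l, !exp_plus.
    assert (exp (m*t) > 0) by apply exp_pos.
    assert (exp (m*T) > 0) by apply exp_pos.
    field. split; lra.
  - intros; apply cont_Bf; auto.
  - intros y; unfold Bf; rewrite Hp, Rmult_plus_distr_l, exp_plus; ring.
  - intros; apply cont_Af; auto.
  - intros y; unfold Af; rewrite Hp, Rmult_plus_distr_l, Ropp_plus_distr, exp_plus; ring.
Qed.

Lemma RInt_expv k v a b : k <> 0 -> RInt (fun s => exp (k*s) * v) a b = v / k * (exp (k*b) - exp (k*a)).
Proof.
  intros Hk.
  apply is_RInt_unique.
  assert (H := is_RInt_derive (V:=R_CompleteNormedModule) (fun s => v / k * exp (k*s)) (fun s => exp (k*s) * v) a b).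
  unfold minus, plus, opp in H; simpl in H.
  replace (v / k * (exp (k * b) - exp (k * a))) with (v / k * exp (k * b) + - (v / k * exp (k * a))) by ring.
  apply H.
  - intros x _. auto_derive; auto. field; auto.
  - intros x _. apply (continuous_mult (K:=R_AbsRing)). apply cont_explin. apply continuous_const.
Qed.

Lemma cK_pos m T : 0 < m -> 0 < T -> 0 < cK m T.
Proof.
  intros Hm HT. unfold cK. apply Rinv_0_lt_compat.
  assert (exp (-(m*T)) < 1). { rewrite <- exp_0. apply exp_increasing. nra. }
  assert (0 < 1 - exp (-(m*T))) by lra. apply Rmult_lt_0_compat; lra.
Qed.

Lemma K_const m T v t : 0 < m -> 0 < T -> K m T (fun _ => v) t = v / (m*m).
Proof.
  intros Hm HT. unfold K, Ai, Bi, Af, Bf.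
  rewrite (RInt_ext (fun s => exp (-(m*s)) * v) (fun s => exp ((-m)*s) * v)).
  2:{ intros; f_equal; f_equal; ring. }
  rewrite !RInt_expv by lra.
  unfold cK.
  replace (-m*(t+T)) with (-(m*(t+T))) by ring.
  replace (-m*t) with (-(m*t)) by ring.
  rewrite !exp_Ropp, !Rmult_plus_distr_l, !exp_plus.
  assert (exp (m*t) > 0) by apply exp_pos.
  assert (1 < exp (m*T)).
  { rewrite <- exp_0. apply exp_increasing. nra. }
  field. repeat split; lra.
Qed.

Lemma exp_le' x y : x <= y -> exp x <= exp y.
Proof. intros H; destruct (Rle_lt_or_eq_dec _ _ H) as [H1|H1].
  left; apply exp_increasing; auto. rewrite H1; lra. Qed.

Lemma K_mono m T h1 h2 t : 0 < m -> 0 < T -> (forall x, continuous h1 x) ->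
  (forall x, continuous h2 x) -> (forall s, h1 s <= h2 s) -> K m T h1 t <= K m T h2 t.
Proof.
  intros Hm HT H1 H2 Hle. unfold K, Ai, Bi.
  apply Rmult_le_compat_l. left; apply cK_pos; auto.
  assert (exp (m*t) > 0) by apply exp_pos.
  assert (exp (-(m*(t+T))) > 0) by apply exp_pos.
  apply Rplus_le_compat; apply Rmult_le_compat_l; try lra; apply RInt_le; try lra;
   try (apply exRI; intros; first [apply cont_Af | apply cont_Bf]; auto).
  - intros x _; unfold Af; apply Rmult_le_compat_l; [left; apply exp_pos|auto].
  - intros x _; unfold Bf; apply Rmult_le_compat_l; [left; apply exp_pos|auto].
Qed.

Lemma AB_bound m T h t Hb : 0 < m -> 0 < T -> (forall x, continuous h x) ->
  (forall s, t <= s <= t + T -> Rabs (h s) <= Hb) ->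
  Rabs (exp (m*t) * Ai m T h t) <= T * Hb /\ Rabs (exp (-(m*(t+T))) * Bi m T h t) <= T * Hb.
Proof.
  intros Hm HT Hc Hh.
  assert (E1 : exp (m*t) > 0) by apply exp_pos.
  assert (E2 : exp (-(m*(t+T))) > 0) by apply exp_pos.
  split; rewrite Rabs_mult, Rabs_pos_eq by lra.
  - assert (Rabs (Ai m T h t) <= (t + T - t) * (exp (-(m*t)) * Hb)).
    { apply abs_RInt_le_const. lra. apply exRI; intros; apply cont_Af; auto.
      intros s Hs. unfold Af. rewrite Rabs_mult, Rabs_pos_eq by (left; apply exp_pos).
      apply Rmult_le_compat. left; apply exp_pos. apply Rabs_pos.
      apply exp_le'. destruct Hs; nra. apply Hh; auto. }
    replace (T * Hb) with (exp (m*t) * ((t + T - t) * (exp (-(m*t)) * Hb))).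
    apply Rmult_le_compat_l; lra.
    rewrite exp_Ropp; field; lra.
  - assert (Rabs (Bi m T h t) <= (t + T - t) * (exp (m*(t+T)) * Hb)).
    { apply abs_RInt_le_const. lra. apply exRI; intros; apply cont_Bf; auto.
      intros s Hs. unfold Bf. rewrite Rabs_mult, Rabs_pos_eq by (left; apply exp_pos).
      apply Rmult_le_compat. left; apply exp_pos. apply Rabs_pos.
      apply exp_le'. destruct Hs; nra. apply Hh; auto. }
    replace (T * Hb) with (exp (-(m*(t+T))) * ((t + T - t) * (exp (m*(t+T)) * Hb))).
    apply Rmult_le_compat_l; lra.
    rewrite exp_Ropp; field; apply Rgt_not_eq, exp_pos.
Qed.

Lemma K_bound m T h t Hb : 0 < m -> 0 < T -> (forall x, continuous h x) ->
  (forall s, t <= s <= t + T -> Rabs (h s) <= Hb) ->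
  Rabs (K m T h t) <= 2 * cK m T * T * Hb /\ Rabs (K1 m T h t) <= 2 * cK m T * m * T * Hb.
Proof.
  intros Hm HT Hc Hh.
  destruct (AB_bound m T h t Hb Hm HT Hc Hh) as [H1 H2].
  assert (Hc0 := cK_pos m T Hm HT).
  unfold K, K1. split.
  - rewrite Rabs_mult, (Rabs_pos_eq (cK m T)) by lra.
    eapply Rle_trans. apply Rmult_le_compat_l. lra. apply Rabs_triang.
    nra.
  - rewrite Rabs_mult, (Rabs_pos_eq (cK m T * m)) by nra.
    assert (Rabs (exp (m * t) * Ai m T h t - exp (- (m * (t + T))) * Bi m T h t) <= 2*T*Hb).
    { unfold Rminus. eapply Rle_trans. apply Rabs_triang. rewrite Rabs_Ropp. lra. }
    eapply Rle_trans. apply Rmult_le_compat_l. nra. apply H. nra.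
Qed.

Lemma K_minus m T h1 h2 t : (forall x, continuous h1 x) -> (forall x, continuous h2 x) ->
  K m T h1 t - K m T h2 t = K m T (fun s => h1 s - h2 s) t.
Proof.
  intros H1 H2. unfold K, Ai, Bi.
  assert (EA : RInt (Af m (fun s => h1 s - h2 s)) t (t+T) = RInt (Af m h1) t (t+T) - RInt (Af m h2) t (t+T)).
  { rewrite <- (RInt_minus (V:=R_CompleteNormedModule)) by (apply exRI; intros; apply cont_Af; auto).
    apply RInt_ext; intros; unfold Af, minus, plus, opp; simpl; ring. }
  assert (EB : RInt (Bf m (fun s => h1 s - h2 s)) t (t+T) = RInt (Bf m h1) t (t+T) - RInt (Bf m h2) t (t+T)).
  { rewrite <- (RInt_minus (V:=R_CompleteNormedModule)) by (apply exRI; intros; apply cont_Bf; auto).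
    apply RInt_ext; intros; unfold Bf, minus, plus, opp; simpl; ring. }
  rewrite EA, EB. ring.
Qed.

Lemma lip_deriv (φ dφ : R -> R) L : (forall x, is_derive φ x (dφ x)) -> (forall x, Rabs (dφ x) <= L) ->
  forall x y, Rabs (φ x - φ y) <= L * Rabs (x - y).
Proof.
  intros Hd Hb x y.
  destruct (MVT_gen φ y x dφ) as [c [_ Hc]].
  - intros; apply Hd.
  - intros z _. apply continuity_pt_filterlim. apply exd_cont. eexists; apply Hd.
  - rewrite Hc, Rabs_mult. apply Rmult_le_compat_r. apply Rabs_pos. apply Hb.
Qed.

Lemma lip_cont (φ : R -> R) L : (forall x y, Rabs (φ x - φ y) <= L * Rabs (x - y)) ->
  forall x, continuous φ x.
Proof.
  intros Hl x. apply continuity_pt_filterlim.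
  intros eps Heps. exists (eps / (Rabs L + 1)). split.
  - apply Rdiv_lt_0_compat; auto. pose proof (Rabs_pos L); lra.
  - intros y [_ Hy]. simpl in *. unfold R_dist in *.
    eapply Rle_lt_trans. apply Hl.
    assert (0 <= Rabs L) by apply Rabs_pos.
    assert (L <= Rabs L) by apply RRle_abs.
    assert (0 <= Rabs (y - x)) by apply Rabs_pos.
    assert (Rabs (y - x) * (Rabs L + 1) < eps).
    { apply (Rmult_lt_compat_r (Rabs L + 1)) in Hy; [|lra].
      replace (eps / (Rabs L + 1) * (Rabs L + 1)) with eps in Hy by (field; lra). lra. }
    nra.
Qed.

Lemma incr_le (u : nat -> R) : (forall n, u n <= u (S n)) -> forall n k, (n <= k)%nat -> u n <= u k.
Proof. intros Hi n k Hk. induction Hk. lra. eapply Rle_trans; [apply IHHk|apply Hi]. Qed.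

Lemma mono_lim (u : nat -> R) B : (forall n, u n <= u (S n)) -> (forall n, u n <= B) ->
  is_lim_seq u (real (Lim_seq u)).
Proof.
  intros Hi Hb.
  assert (H := Lim_seq_correct u (ex_lim_seq_incr u Hi)).
  assert (H1 := is_lim_seq_le u (fun _ => B) _ _ Hb H (is_lim_seq_const B)).
  assert (H2 := is_lim_seq_le (fun _ => u O) u _ _ (fun n => incr_le u Hi O n (Nat.le_0_l n)) (is_lim_seq_const (u O)) H).
  destruct (Lim_seq u); simpl in *; auto; contradiction.
Qed.

Lemma grid_cover a h (Hh : 0 < h) : forall j x, a <= x <= a + INR j * h ->
  exists k, (k <= j)%nat /\ Rabs (x - (a + INR k * h)) <= h.
Proof.
  induction j; intros x Hx.
  - exists O; split; auto. simpl in *. rewrite Rabs_le_between. lra.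
  - destruct (Rle_dec x (a + INR j * h)) as [Hl|Hl].
    + destruct (IHj x) as [k [Hk Hk']]. lra. exists k; split; auto.
    + exists (S j); split; auto. rewrite S_INR in *. rewrite Rabs_le_between. nra.
Qed.

Lemma unif (u : nat -> R -> R) (v : R -> R) a b L :
  0 <= L -> a <= b -> (forall n x, u n x <= u (S n) x) -> (forall n x, u n x <= v x) ->
  (forall x, is_lim_seq (fun n => u n x) (v x)) ->
  (forall n x y, Rabs (u n x - u n y) <= L * Rabs (x - y)) ->
  (forall x y, Rabs (v x - v y) <= L * Rabs (x - y)) ->
  forall eps, 0 < eps -> exists N, forall n x, (N <= n)%nat -> a <= x <= b -> v x - u n x <= eps.
Proof.
  intros HL Hab Hi Hv Hl Hu Hvl eps Heps.
  set (h := eps / (3 * (L + 1))).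
  assert (Hh : 0 < h) by (unfold h; apply Rdiv_lt_0_compat; lra).
  assert (HLh : L * h <= eps / 3).
  { unfold h. replace (eps / 3) with ((L+1) * (eps / (3 * (L + 1)))) by (field; lra).
    apply Rmult_le_compat_r. left; auto. lra. }
  destruct (nfloor_ex ((b - a) / h)) as [Nn HNn].
  { apply Rdiv_le_0_compat; lra. }
  assert (Hcov : b <= a + INR (S Nn) * h).
  { rewrite S_INR. destruct HNn as [_ HN].
    apply (Rmult_lt_compat_r h) in HN; auto.
    replace ((b - a) / h * h) with (b - a) in HN by (field; lra). lra. }
  assert (Hgrid : forall j, exists N, forall k n, (k <= j)%nat -> (N <= n)%nat ->
     v (a + INR k * h) - u n (a + INR k * h) <= eps / 3).
  { induction j.
    - assert (Hlim := proj2 (is_lim_seq_spec _ _) (Hl (a + INR 0 * h))).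
      destruct (Hlim (mkposreal (eps/3) ltac:(lra))) as [N HN]. exists N.
      intros k n Hk Hn. inversion Hk; subst. specialize (HN n Hn). simpl in HN |- *.
      rewrite Rabs_lt_between in HN. lra.
    - destruct IHj as [N1 HN1].
      assert (Hlim := proj2 (is_lim_seq_spec _ _) (Hl (a + INR (S j) * h))).
      destruct (Hlim (mkposreal (eps/3) ltac:(lra))) as [N2 HN2].
      exists (Nat.max N1 N2). intros k n Hk Hn.
      inversion Hk; subst.
      + specialize (HN2 n ltac:(lia)). simpl in HN2 |- *. rewrite Rabs_lt_between in HN2. lra.
      + apply HN1; lia. }
  destruct (Hgrid (S Nn)) as [N HN].
  exists N. intros n x Hn Hx.
  destruct (grid_cover a h Hh (S Nn) x ltac:(lra)) as [k [Hk Hd]].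
  set (g := a + INR k * h) in *.
  specialize (HN k n Hk Hn).
  assert (H1 := Hvl x g). assert (H2 := Hu n g x).
  rewrite Rabs_minus_sym in Hd.
  assert (L * Rabs (x - g) <= L * h) by (apply Rmult_le_compat_l; auto; rewrite Rabs_minus_sym; auto).
  assert (L * Rabs (g - x) <= L * h) by (apply Rmult_le_compat_l; auto).
  rewrite Rabs_le_between in H1, H2. fold g in HN. lra.
Qed.

Lemma per_Derive (f : R -> R) T : (forall t, ex_derive f t) -> periodic f T -> periodic (Derive f) T.
Proof.
  intros Hd Hp t.
  assert (H1 : is_derive f (t+T) (Derive f (t+T))) by (apply Derive_correct; auto).
  assert (H2 := is_derive_comp f (fun s => s + T) t _ 1 H1).
  assert (H3 : is_derive (fun s => s + T) t 1) by (auto_derive; auto; ring).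
  specialize (H2 H3).
  apply is_derive_ext with (g := f) in H2.
  - apply is_derive_unique in H2. rewrite H2. unfold scal; simpl; unfold mult; simpl; ring.
  - intros; apply Hp.
Qed.

Lemma per_nat (p : R -> R) T : periodic p T -> forall n t, p (t + INR n * T) = p t /\ p (t - INR n * T) = p t.
Proof.
  intros Hp n. induction n; intros t.
  - simpl. split; f_equal; ring.
  - rewrite S_INR. split.
    + replace (t + (INR n + 1) * T) with ((t + INR n * T) + T) by ring. rewrite Hp. apply IHn.
    + rewrite <- (Hp (t - (INR n + 1) * T)). replace (t - (INR n + 1) * T + T) with (t - INR n * T) by ring.
      apply IHn.
Qed.

Lemma per_bound (p : R -> R) T : 0 < T -> (forall t, continuous p t) -> periodic p T ->
  exists P, 0 <= P /\ forall t, Rabs (p t) <= P.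
Proof.
  intros HT Hc Hp.
  destruct (continuity_ab_maj (fun t => Rabs (p t)) 0 T) as [Mx [HM _]].
  { lra. }
  { intros c _. apply continuity_pt_comp with (f1 := p) (f2 := Rabs).
    apply continuity_pt_filterlim, Hc. apply Rcontinuity_abs. }
  exists (Rabs (p Mx)). split. apply Rabs_pos.
  intros t.
  destruct (nfloor_ex (Rabs t / T)) as [n1 Hn1]. { apply Rdiv_le_0_compat. apply Rabs_pos. lra. }
  set (t1 := t + INR (S n1) * T).
  assert (Ht1 : 0 <= t1).
  { unfold t1. rewrite S_INR. destruct Hn1 as [_ Hn1].
    apply (Rmult_lt_compat_r T) in Hn1; auto.
    replace (Rabs t / T * T) with (Rabs t) in Hn1 by (field; lra).
    pose proof (Rle_abs (-t)). rewrite Rabs_Ropp in H. nra. }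
  destruct (nfloor_ex (t1 / T)) as [n2 Hn2]. { apply Rdiv_le_0_compat; lra. }
  set (t2 := t1 - INR n2 * T).
  assert (0 <= t2 <= T).
  { unfold t2. destruct Hn2 as [A B].
    apply (Rmult_le_compat_r T) in A; [|lra]. apply (Rmult_lt_compat_r T) in B; auto.
    replace (t1 / T * T) with t1 in A, B by (field; lra). lra. }
  replace (p t) with (p t2). apply HM; auto.
  unfold t2, t1. rewrite (proj2 (per_nat p T Hp n2 _)). apply (proj1 (per_nat p T Hp (S n1) _)).
Qed.

Definition Ff (g l : R) (p : R -> R) t th := g / l * sin th - / l * p t * cos th.
Definition Hf M g l p t th := M * th - Ff g l p t th.

Lemma F_lip g l p P t x y : 0 < g -> 0 < l -> Rabs (p t) <= P ->
  Rabs (Ff g l p t x - Ff g l p t y) <= (g/l + P/l) * Rabs (x - y).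
Proof.
  intros Hg Hl Hp.
  apply (lip_deriv (fun th => Ff g l p t th) (fun th => g/l * cos th + / l * p t * sin th)).
  - intros z. unfold Ff. auto_derive; auto. ring.
  - intros z. eapply Rle_trans. apply Rabs_triang.
    rewrite !Rabs_mult. rewrite (Rabs_pos_eq (g/l)) by (left; apply Rdiv_lt_0_compat; auto).
    rewrite (Rabs_pos_eq (/l)) by (left; apply Rinv_0_lt_compat; auto).
    assert (Rabs (cos z) <= 1) by (rewrite Rabs_le_between; apply COS_bound).
    assert (Rabs (sin z) <= 1) by (rewrite Rabs_le_between; apply SIN_bound).
    assert (0 < g/l) by (apply Rdiv_lt_0_compat; auto).
    assert (0 < /l) by (apply Rinv_0_lt_compat; auto).
    assert (0 <= Rabs (cos z)) by apply Rabs_pos. assert (0 <= Rabs (sin z)) by apply Rabs_pos.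
    assert (0 <= Rabs (p t)) by apply Rabs_pos.
    replace (P / l) with (/ l * P) by (unfold Rdiv; ring).
    assert (g / l * Rabs (cos z) <= g / l) by nra.
    assert (Rabs (p t) * Rabs (sin z) <= P) by nra.
    assert (/ l * (Rabs (p t) * Rabs (sin z)) <= / l * P) by nra. nra.
Qed.

Lemma F_bound g l p P t x : 0 < g -> 0 < l -> Rabs (p t) <= P -> Rabs (Ff g l p t x) <= g/l + P/l.
Proof.
  intros Hg Hl Hp. unfold Ff. unfold Rminus. eapply Rle_trans. apply Rabs_triang.
  rewrite Rabs_Ropp, !Rabs_mult. rewrite (Rabs_pos_eq (g/l)) by (left; apply Rdiv_lt_0_compat; auto).
  rewrite (Rabs_pos_eq (/l)) by (left; apply Rinv_0_lt_compat; auto).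
  assert (Rabs (cos x) <= 1) by (rewrite Rabs_le_between; apply COS_bound).
  assert (Rabs (sin x) <= 1) by (rewrite Rabs_le_between; apply SIN_bound).
  assert (0 < g/l) by (apply Rdiv_lt_0_compat; auto).
  assert (0 < /l) by (apply Rinv_0_lt_compat; auto).
  assert (0 <= Rabs (cos x)) by apply Rabs_pos. assert (0 <= Rabs (sin x)) by apply Rabs_pos.
  assert (0 <= Rabs (p t)) by apply Rabs_pos.
  replace (P / l) with (/ l * P) by (unfold Rdiv; ring).
  assert (g / l * Rabs (sin x) <= g / l) by nra.
  assert (Rabs (p t) * Rabs (cos x) <= P) by nra.
  assert (/ l * (Rabs (p t) * Rabs (cos x)) <= / l * P) by nra. nra.
Qed.

Lemma H_mono M g l p P t x y : 0 < g -> 0 < l -> Rabs (p t) <= P -> g/l + P/l <= M -> x <= y ->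
  Hf M g l p t x <= Hf M g l p t y.
Proof.
  intros Hg Hl Hp HM Hxy. unfold Hf.
  assert (H := F_lip g l p P t y x Hg Hl Hp).
  rewrite (Rabs_pos_eq (y - x)) in H by lra. rewrite Rabs_le_between in H.
  assert (0 <= P) by (eapply Rle_trans; [apply Rabs_pos|apply Hp]).
  nra.
Qed.

Lemma H_lip M g l p P t x y : 0 < g -> 0 < l -> Rabs (p t) <= P -> 0 <= M ->
  Rabs (Hf M g l p t x - Hf M g l p t y) <= (M + (g/l + P/l)) * Rabs (x - y).
Proof.
  intros Hg Hl Hp HM. unfold Hf.
  replace (M * x - Ff g l p t x - (M * y - Ff g l p t y)) with (M * (x - y) + - (Ff g l p t x - Ff g l p t y)) by ring.
  eapply Rle_trans. apply Rabs_triang. rewrite Rabs_Ropp, Rabs_mult, (Rabs_pos_eq M) by auto.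
  assert (H := F_lip g l p P t x y Hg Hl Hp). lra.
Qed.

Lemma cc_pt (f : R -> R) x : continuous f x <-> continuity_pt f x.
Proof. split; intros H; apply continuity_pt_filterlim; auto. Qed.

Lemma cpt_mult (f g : R -> R) x : continuity_pt f x -> continuity_pt g x -> continuity_pt (fun t => f t * g t) x.
Proof. apply continuity_pt_mult. Qed.
Lemma cpt_plus (f g : R -> R) x : continuity_pt f x -> continuity_pt g x -> continuity_pt (fun t => f t + g t) x.
Proof. apply continuity_pt_plus. Qed.
Lemma cpt_minus (f g : R -> R) x : continuity_pt f x -> continuity_pt g x -> continuity_pt (fun t => f t - g t) x.
Proof. apply continuity_pt_minus. Qed.
Lemma cpt_opp (f : R -> R) x : continuity_pt f x -> continuity_pt (fun t => - f t) x.
Proof. apply continuity_pt_opp. Qed.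
Lemma cpt_const c x : continuity_pt (fun _ => c) x.
Proof. apply continuity_pt_const. intros a b; auto. Qed.
Lemma cpt_sin (f : R -> R) x : continuity_pt f x -> continuity_pt (fun t => sin (f t)) x.
Proof. intros H. apply (continuity_pt_comp f sin); auto. apply continuity_sin. Qed.
Lemma cpt_cos (f : R -> R) x : continuity_pt f x -> continuity_pt (fun t => cos (f t)) x.
Proof. intros H. apply (continuity_pt_comp f cos); auto. apply continuity_cos. Qed.

Ltac cpt := repeat first [ apply cc_pt; solve [auto] | apply cpt_mult | apply cpt_plus | apply cpt_minus | apply cpt_opp
   | apply cpt_sin | apply cpt_cos | apply cpt_const ].

Lemma H_cont M g l p th x : (forall t, continuous p t) -> (forall t, continuous th t) ->
  continuous (fun s => Hf M g l p s (th s)) x.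
Proof.
  intros Hp Ht. apply cc_pt. unfold Hf, Ff. cpt; apply cc_pt; auto.
Qed.

Fixpoint it (m T M g l th0 : R) (p : R -> R) (n : nat) : R -> R :=
  match n with
  | O => fun _ => - th0
  | S n => K m T (fun s => Hf M g l p s (it m T M g l th0 p n s))
  end.

Definition Setup (g l T m M P th0 : R) (p : R -> R) : Prop :=
  0 < g /\ 0 < l /\ 0 < T /\ 0 < m /\ m * m = M /\ 0 <= P /\ (forall t, Rabs (p t) <= P) /\
  g/l + P/l <= M /\ (forall t, continuous p t) /\ periodic p T /\ 0 <= th0 /\
  (forall t, 0 <= Ff g l p t th0) /\ (forall t, Ff g l p t (-th0) <= 0).

Lemma it_props g l T m M P th0 p : Setup g l T m M P th0 p -> forall n,
  (forall t, continuous (it m T M g l th0 p n) t) /\ periodic (it m T M g l th0 p n) T /\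
  (forall t, - th0 <= it m T M g l th0 p n t <= th0).
Proof.
  intros (Hg & Hl & HT & Hm & HM & HP & Hpb & HMb & Hpc & Hpp & Hth & Hup & Hlo).
  induction n as [|n IH].
  - simpl. split; [|split]. intros; apply continuous_const. intros t; auto. intros; lra.
  - destruct IH as (Hc & Hper & Hb). simpl.
    set (h := fun s => Hf M g l p s (it m T M g l th0 p n s)).
    assert (Hhc : forall x, continuous h x) by (intros; apply H_cont; auto).
    assert (Hhp : periodic h T).
    { intros t; unfold h. rewrite Hper. unfold Hf, Ff. rewrite Hpp. auto. }
    split; [|split].
    + intros t. apply exd_cont. eexists. apply K_der; auto.
    + apply K_per; auto.
    + intros t. split.
      * replace (- th0) with (K m T (fun _ => M * - th0) t).
        apply K_mono; auto. intros; apply continuous_const.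
        intros s. unfold h. apply Rle_trans with (Hf M g l p s (- th0)).
        unfold Hf. specialize (Hlo s). lra.
        apply H_mono with P; auto. apply Hb.
        rewrite K_const by auto. rewrite <- HM. field. lra.
      * replace th0 with (K m T (fun _ => M * th0) t) at 1.
        apply K_mono; auto. intros; apply continuous_const.
        intros s. unfold h. apply Rle_trans with (Hf M g l p s th0).
        apply H_mono with P; auto. apply Hb.
        unfold Hf. specialize (Hup s). lra.
        rewrite K_const by auto. rewrite <- HM. field. lra.
Qed.

Lemma it_mono g l T m M P th0 p : Setup g l T m M P th0 p -> forall n t,
  it m T M g l th0 p n t <= it m T M g l th0 p (S n) t.
Proof.
  intros S. pose proof (it_props _ _ _ _ _ _ _ _ S) as IP.
  destruct S as (Hg & Hl & HT & Hm & HM & HP & Hpb & HMb & Hpc & Hpp & Hth & Hup & Hlo).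
  induction n as [|n IH]; intros t.
  - destruct (IP 1%nat) as (_ & _ & Hb). specialize (Hb t). simpl in Hb |- *. lra.
  - change (K m T (fun s => Hf M g l p s (it m T M g l th0 p n s)) t <=
            K m T (fun s => Hf M g l p s (it m T M g l th0 p (S n) s)) t).
    apply K_mono; auto.
    + intros; apply H_cont; auto. apply IP.
    + intros; apply H_cont; auto. apply IP.
    + intros s. apply H_mono with P; auto.
Qed.

Lemma H_bound g l T m M P th0 p s x : Setup g l T m M P th0 p -> - th0 <= x <= th0 ->
  Rabs (Hf M g l p s x) <= M * th0 + (g/l + P/l).
Proof.
  intros (Hg & Hl & HT & Hm & HM & HP & Hpb & HMb & Hpc & Hpp & Hth & Hup & Hlo) Hx.
  unfold Hf, Rminus. eapply Rle_trans. apply Rabs_triang. rewrite Rabs_Ropp, Rabs_mult.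
  assert (0 < M) by nra. rewrite (Rabs_pos_eq M) by lra.
  assert (Rabs x <= th0) by (apply Rabs_le; lra).
  assert (Rabs (Ff g l p s x) <= g/l + P/l) by (apply F_bound; auto).
  nra.
Qed.

Lemma it_lip g l T m M P th0 p : Setup g l T m M P th0 p -> forall n x y,
  Rabs (it m T M g l th0 p n x - it m T M g l th0 p n y) <=
  (2 * cK m T * m * T * (M * th0 + (g/l + P/l))) * Rabs (x - y).
Proof.
  intros S. pose proof (it_props _ _ _ _ _ _ _ _ S) as IP.
  pose proof S as S'.
  destruct S as (Hg & Hl & HT & Hm & HM & HP & Hpb & HMb & Hpc & Hpp & Hth & Hup & Hlo).
  assert (0 < cK m T) by (apply cK_pos; auto).
  assert (0 < g/l) by (apply Rdiv_lt_0_compat; auto).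
  assert (0 <= P/l) by (apply Rdiv_le_0_compat; lra).
  assert (0 < M) by nra.
  intros [|n] x y.
  - simpl. replace (- th0 - - th0) with 0 by ring. rewrite Rabs_R0.
    apply Rmult_le_pos; [|apply Rabs_pos].
    apply Rmult_le_pos; [|nra]. repeat apply Rmult_le_pos; lra.
  - simpl. set (h := fun s => Hf M g l p s (it m T M g l th0 p n s)).
    assert (Hhc : forall x, continuous h x) by (intros; apply H_cont; auto; apply IP).
    assert (Hhp : periodic h T).
    { intros t; unfold h. rewrite (proj1 (proj2 (IP n))). unfold Hf, Ff. rewrite Hpp. auto. }
    apply (lip_deriv _ (K1 m T h)).
    + intros; apply K_der; auto.
    + intros z. apply (K_bound m T h z). auto. auto. auto.
      intros s _. unfold h. apply H_bound with T m; auto. apply IP.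
Qed.

Definition thl m T M g l th0 p t := real (Lim_seq (fun n => it m T M g l th0 p n t)).

Lemma thl_props g l T m M P th0 p : Setup g l T m M P th0 p ->
  let u := it m T M g l th0 p in let v := thl m T M g l th0 p in
  let Lit := 2 * cK m T * m * T * (M * th0 + (g/l + P/l)) in
  (forall t, is_lim_seq (fun n => u n t) (v t)) /\ (forall n t, u n t <= v t) /\
  (forall t, - th0 <= v t <= th0) /\ (forall x y, Rabs (v x - v y) <= Lit * Rabs (x - y)) /\
  periodic v T.
Proof.
  intros S u v Lit.
  pose proof (it_props _ _ _ _ _ _ _ _ S) as IP.
  pose proof (it_mono _ _ _ _ _ _ _ _ S) as IM.
  pose proof (it_lip _ _ _ _ _ _ _ _ S) as IL.
  assert (Hlim : forall t, is_lim_seq (fun n => u n t) (v t)).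
  { intros t. apply (mono_lim (fun n => u n t) th0). intros; apply IM. intros n; apply IP. }
  assert (Hle : forall n t, u n t <= v t).
  { intros n t. apply (is_lim_seq_incr_compare (fun n => u n t)). apply Hlim. intros; apply IM. }
  split; [|split; [|split; [|split]]]; auto.
  - intros t. split. apply (Rle_trans _ (u O t)); [unfold u; simpl; lra | apply Hle].
    assert (H := is_lim_seq_le (fun n => u n t) (fun _ => th0) _ _ (fun n => proj2 (proj2 (proj2 (IP n)) t)) (Hlim t) (is_lim_seq_const th0)).
    simpl in H. auto.
  - intros x y.
    assert (Hl := is_lim_seq_abs _ _ (is_lim_seq_minus' _ _ _ _ (Hlim x) (Hlim y))).
    assert (H := is_lim_seq_le _ (fun _ => Lit * Rabs (x - y)) _ _ (fun n => IL n x y) Hl (is_lim_seq_const _)).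
    simpl in H. auto.
  - intros t. unfold v, thl. f_equal. apply Lim_seq_ext. intros n. apply (proj1 (proj2 (IP n))).
Qed.

Lemma eq_small x y C : 0 <= C -> (forall eps, 0 < eps -> Rabs (x - y) <= eps * C) -> x = y.
Proof.
  intros HC H. destruct (Req_dec x y) as [|Hn]; auto. exfalso.
  assert (Hp : 0 < Rabs (x - y)) by (apply Rabs_pos_lt; lra).
  specialize (H (Rabs (x - y) / (2 * (C + 1)))).
  assert (0 < Rabs (x - y) / (2 * (C + 1))) by (apply Rdiv_lt_0_compat; lra).
  specialize (H H0).
  assert (Rabs (x - y) / (2 * (C + 1)) * C < Rabs (x - y)).
  { replace (Rabs (x - y) / (2 * (C + 1)) * C) with (Rabs (x - y) * (C / (2 * (C + 1)))) by (field; lra).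
    assert (C / (2 * (C + 1)) < 1). { apply (Rmult_lt_reg_r (2 * (C+1))). lra.
      replace (C / (2 * (C + 1)) * (2 * (C + 1))) with C by (field; lra). lra. }
    nra. }
  lra.
Qed.

Lemma thl_fix g l T m M P th0 p : Setup g l T m M P th0 p -> forall t,
  thl m T M g l th0 p t = K m T (fun s => Hf M g l p s (thl m T M g l th0 p s)) t.
Proof.
  intros HS t.
  destruct (thl_props _ _ _ _ _ _ _ _ HS) as (Hlim & Hle & Hb & Hlip & Hper).
  pose proof (it_props _ _ _ _ _ _ _ _ HS) as IP.
  pose proof (it_mono _ _ _ _ _ _ _ _ HS) as IM.
  pose proof (it_lip _ _ _ _ _ _ _ _ HS) as IL.
  pose proof HS as S'.
  destruct S' as (Hg & Hl & HT & Hm & HM & HP & Hpb & HMb & Hpc & Hpp & Hth & Hup & Hlo).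
  assert (0 < cK m T) by (apply cK_pos; auto).
  assert (0 < g/l) by (apply Rdiv_lt_0_compat; auto).
  assert (0 <= P/l) by (apply Rdiv_le_0_compat; lra).
  assert (0 < M) by nra.
  set (u := it m T M g l th0 p) in *. set (v := thl m T M g l th0 p) in *.
  set (Lit := 2 * cK m T * m * T * (M * th0 + (g/l + P/l))) in *.
  assert (HLit : 0 <= Lit).
  { unfold Lit. apply Rmult_le_pos; [|nra]. repeat apply Rmult_le_pos; lra. }
  assert (Hvc : forall x, continuous v x) by (apply lip_cont with Lit; auto).
  set (hl := fun s => Hf M g l p s (v s)).
  assert (Hhl : forall x, continuous hl x) by (intros; apply H_cont; auto).
  set (C := 2 * cK m T * T * (M + (g/l + P/l))).
  apply eq_small with (1 + C). unfold C. assert (0 <= 2 * cK m T * T) by (repeat apply Rmult_le_pos; lra). nra.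
  intros eps Heps.
  destruct (unif u v t (t+T) Lit HLit ltac:(lra) IM Hle Hlim IL Hlip eps Heps) as [N1 HN1].
  assert (Hl2 := proj2 (is_lim_seq_spec _ _) (Hlim t)).
  destruct (Hl2 (mkposreal eps Heps)) as [N2 HN2]. simpl in HN2.
  set (n := Nat.max N1 N2).
  specialize (HN2 (S n) ltac:(unfold n; lia)).
  set (hn := fun s => Hf M g l p s (u n s)).
  assert (Hhn : forall x, continuous hn x) by (intros; apply H_cont; auto; apply IP).
  assert (E : u (S n) t = K m T hn t) by reflexivity.
  rewrite E in HN2.
  assert (Hd : Rabs (K m T hn t - K m T hl t) <= 2 * cK m T * T * ((M + (g/l + P/l)) * eps)).
  { rewrite K_minus by auto.
    eapply proj1. apply (K_bound m T (fun s => hn s - hl s) t); auto.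
    - intros; apply (continuous_minus (K:=R_AbsRing) (V:=R_NormedModule)); auto.
    - intros s Hs. unfold hn, hl. eapply Rle_trans. apply (H_lip M g l p P s); auto; lra.
      apply Rmult_le_compat_l. lra.
      specialize (HN1 n s ltac:(unfold n; lia) Hs). specialize (Hle n s).
      rewrite Rabs_le_between. lra. }
  replace (v t - K m T hl t) with ((v t - K m T hn t) + (K m T hn t - K m T hl t)) by ring.
  eapply Rle_trans. apply Rabs_triang.
  rewrite Rabs_minus_sym in HN2. unfold C. nra.
Qed.

Theorem theorem1p1 (l g T : R) (f : R -> R) :
  0 < l -> 0 < g -> 0 < T ->
  C2 f -> periodic f T ->
  exists x : R -> R,
    C2 x /\ periodic x T /\ (forall t, - l < x t < l) /\
    (forall t,
       Derive (Derive x) t =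
         (g / l ^ 2 * sqrt (l ^ 2 - x t ^ 2)
            - (Derive x t) ^ 2 / (l ^ 2 - x t ^ 2)) * x t
         - (l ^ 2 - x t ^ 2) / l ^ 2 * Derive (Derive f) t).
Proof.
  intros Hl Hg HT (Hf1 & Hf2 & Hf3) Hper.
  set (p := Derive (Derive f)).
  assert (Hpc : forall t, continuous p t) by exact Hf3.
  assert (Hpp : periodic p T) by (apply per_Derive; auto; apply per_Derive; auto).
  destruct (per_bound p T HT Hpc Hpp) as [P [HP Hpb]].
  set (M := g/l + P/l + 1).
  assert (0 < g/l) by (apply Rdiv_lt_0_compat; auto).
  assert (0 <= P/l) by (apply Rdiv_le_0_compat; lra).
  assert (HM0 : 0 < M) by (unfold M; lra).
  set (m := sqrt M).
  assert (Hmm : m * m = M) by (apply sqrt_sqrt; lra).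
  assert (Hm : 0 < m) by (apply sqrt_lt_R0; auto).
  set (th0 := atan (P / g)).
  assert (Hth0 : 0 <= th0).
  { unfold th0. rewrite <- atan_0. destruct (Rle_lt_or_eq_dec 0 (P/g)) as [H1|H1].
    apply Rdiv_le_0_compat; lra. left; apply atan_increasing; auto. rewrite H1; lra. }
  assert (Hth1 : th0 < PI / 2) by apply atan_bound.
  assert (Hcos0 : 0 < cos th0) by (apply cos_gt_0; lra).
  assert (Hsin0 : sin th0 = P / g * cos th0).
  { unfold th0. rewrite sin_atan, cos_atan.
    assert (0 < sqrt (1 + (P/g)²)) by (apply sqrt_lt_R0; pose proof (Rle_0_sqr (P/g)); lra).
    field. lra. }
  assert (HS : Setup g l T m M P th0 p).
  { repeat split; auto; try lra.
    - unfold M; lra.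
    - intros t. unfold Ff. rewrite Hsin0.
      assert (p t <= P) by (pose proof (Hpb t); apply Rabs_le_between in H1; lra).
      replace (g / l * (P / g * cos th0) - / l * p t * cos th0) with (cos th0 / l * (P - p t)) by (field; lra).
      apply Rmult_le_pos. apply Rdiv_le_0_compat; lra. lra.
    - intros t. unfold Ff. rewrite sin_neg, cos_neg, Hsin0.
      assert (- P <= p t) by (pose proof (Hpb t); apply Rabs_le_between in H1; lra).
      replace (g / l * - (P / g * cos th0) - / l * p t * cos th0) with (- (cos th0 / l * (P + p t))) by (field; lra).
      assert (0 <= cos th0 / l * (P + p t)). apply Rmult_le_pos. apply Rdiv_le_0_compat; lra. lra. lra. }
  destruct (thl_props _ _ _ _ _ _ _ _ HS) as (_ & _ & Hb & Hlip & Hper_th).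
  pose proof (thl_fix _ _ _ _ _ _ _ _ HS) as Hfix.
  set (th := thl m T M g l th0 p) in *.
  set (Lit := 2 * cK m T * m * T * (M * th0 + (g/l + P/l))) in *.
  assert (Hthc : forall x, continuous th x) by (apply lip_cont with Lit; auto).
  set (h := fun s => Hf M g l p s (th s)) in *.
  assert (Hhc : forall x, continuous h x) by (intros; apply H_cont; auto).
  assert (Hhp : periodic h T).
  { intros t; unfold h. rewrite Hper_th. unfold Hf, Ff. rewrite Hpp. auto. }
  set (D := K1 m T h).
  assert (Hd1 : forall t, is_derive th t (D t)).
  { intros t. apply is_derive_ext with (K m T h). intros; symmetry; apply Hfix.
    apply K_der; auto. }
  assert (Hd2 : forall t, is_derive D t (Ff g l p t (th t))).
  { intros t. replace (Ff g l p t (th t)) with (m * m * K m T h t - h t).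
    apply K1_der; auto. rewrite <- Hfix, Hmm. unfold h, Hf. ring. }
  assert (HDc : forall x, continuous D x) by (intros; apply exd_cont; eexists; apply Hd2).
  assert (Hcos : forall t, 0 < cos (th t)) by (intros t; specialize (Hb t); apply cos_gt_0; lra).
  set (x := fun t => l * sin (th t)).
  set (dx := fun t => l * cos (th t) * D t).
  set (ddx := fun t => l * (- sin (th t) * D t * D t + cos (th t) * Ff g l p t (th t))).
  assert (Hx1 : forall t, is_derive x t (dx t)).
  { intros t. unfold x, dx. auto_derive. eexists; apply Hd1.
    replace (Derive (fun x0 : R => th x0) t) with (D t) by (symmetry; apply is_derive_unique; apply Hd1). ring. }
  assert (Edx : forall t, Derive x t = dx t) by (intros; apply is_derive_unique; auto).
  assert (Hx2 : forall t, is_derive (Derive x) t (ddx t)).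
  { intros t. apply is_derive_ext with dx. intros; symmetry; auto.
    unfold dx, ddx. auto_derive. split; [eexists; apply Hd1 | split; [eexists; apply Hd2|exact I]].
    replace (Derive (fun x0 : R => th x0) t) with (D t) by (symmetry; apply is_derive_unique; apply Hd1).
    replace (Derive (fun x0 : R => D x0) t) with (Ff g l p t (th t)) by (symmetry; apply is_derive_unique; apply Hd2). ring. }
  assert (Eddx : forall t, Derive (Derive x) t = ddx t) by (intros; apply is_derive_unique; auto).
  exists x. split; [|split; [|split]].
  - split; [|split].
    + intros t; eexists; apply Hx1.
    + intros t; eexists; apply Hx2.
    + intros t. apply continuous_ext with ddx. intros; symmetry; auto.
      apply cc_pt. unfold ddx, Ff. cpt; apply cc_pt; auto.
  - intros t. unfold x. rewrite Hper_th. auto.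
  - intros t. unfold x. assert (0 < cos (th t)) by auto.
    assert (Hs : sin (th t) ^ 2 + cos (th t) ^ 2 = 1) by (pose proof (sin2_cos2 (th t)) as Hs0; unfold Rsqr in Hs0; lra).
    assert (Rabs (sin (th t)) < 1).
    { apply Rabs_lt_between. split; nra. }
    rewrite Rabs_lt_between in H2. split; nra.
  - intros t. rewrite Eddx, Edx. unfold ddx, dx, x.
    assert (Hc := Hcos t).
    assert (Hs : sin (th t) ^ 2 + cos (th t) ^ 2 = 1) by (pose proof (sin2_cos2 (th t)) as Hs0; unfold Rsqr in Hs0; lra).
    replace (l ^ 2 - (l * sin (th t)) ^ 2) with ((l * cos (th t)) ^ 2) by nra.
    rewrite sqrt_pow2 by nra.
    unfold Ff. field. split; lra.
Qed.
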